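(* Let $\mathcal{D} \subset \mathbb{R}^d$ be a finite nonempty set of vectors and let $q \in \mathbb{R}^d$. Then there exists a scalar $\bar{\mu} \in \mathbb{R}$ such that for every $\mu > \max(\bar{\mu}, 0)$, every nearest neighbor of $q' = \mu q$ in $\mathcal{D}$ is a maximum inner product solution for $q$; that is, if $p \in \mathcal{D}$ satisfies $\lVert p - \mu q\rVert \le \lVert p' - \mu q\rVert$ for all $p' \in \mathcal{D}$, then $\langle p, q\rangle \ge \langle p', q\rangle$ for all $p' \in \mathcal{D}$.
   Context: $\lVert\cdot\rVert$ is the Euclidean ($L_2$) norm and $\langle\cdot,\cdot\rangle$ the standard inner product on $\mathbb{R}^d$. A nearest neighbor of a vector $x$ in $\mathcal{D}$ is a point of $\mathcal{D}$ minimizing the Euclidean distance to $x$; a maximum inner product solution for $q$ is a point of $\mathcal{D}$ maximizing $\langle \cdot, q\rangle$ over $\mathcal{D}$. *)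

(* Defs.v *)
From mathcomp Require Import all_boot all_order all_algebra.
From mathcomp Require Import reals.
Set Implicit Arguments. Unset Strict Implicit. Unset Printing Implicit Defensive.
Import Order.TTheory GRing.Theory Num.Theory.
Local Open Scope ring_scope.

Definition dotp (R : rcfType) (d : nat) (u v : 'rV[R]_d) : R :=
  \sum_(i < d) u 0 i * v 0 i.

Definition enorm (R : rcfType) (d : nat) (u : 'rV[R]_d) : R :=
  Num.sqrt (dotp u u).

(* Main.v *)
Require Import Defs.
From mathcomp Require Import all_boot all_order all_algebra.
From mathcomp Require Import reals.
From mathcomp Require Import ring lra.
Import Order.TTheory GRing.Theory Num.Theory.
Local Open Scope ring_scope.

Lemma le_sum_mem (R : realType) (T : eqType) (s : seq T) (f : T -> R) x :
  (forall y, 0 <= f y) -> x \in s -> f x <= \sum_(y <- s) f y.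
Proof.
move=> f0; elim: s => [|a s IH] //=; rewrite in_cons big_cons.
case/orP=> [/eqP->|/IH H].
  by rewrite lerDl sumr_ge0.
by rewrite (le_trans H) // lerDr.
Qed.

Lemma dotp_expand (R : realType) d (u q : 'rV[R]_d) mu :
  dotp (u - mu *: q) (u - mu *: q) = dotp u u - 2 * mu * dotp u q + mu ^+ 2 * dotp q q.
Proof.
rewrite /dotp (eq_bigr (fun i => u 0 i * u 0 i - 2 * mu * (u 0 i * q 0 i)
   + mu ^+ 2 * (q 0 i * q 0 i))); last by move=> i _; rewrite !mxE; ring.
by rewrite big_split big_split /= sumrN -!mulr_sumr.
Qed.

Lemma dotp_ge0 (R : realType) d (u : 'rV[R]_d) : 0 <= dotp u u.
Proof. by rewrite /dotp sumr_ge0 // => i _; rewrite -expr2 sqr_ge0. Qed.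

Theorem theorem1 (R : realType) (d : nat) (D : seq 'rV[R]_d) (q : 'rV[R]_d) :
  D != [::] ->
  exists mubar : R, forall mu : R, Num.max mubar 0 < mu ->
    forall p, p \in D ->
      (forall p', p' \in D -> enorm (p - mu *: q) <= enorm (p' - mu *: q)) ->
      forall p', p' \in D -> dotp p' q <= dotp p q.
Proof.
move=> _.
pose f (a b : 'rV[R]_d) := `|dotp b b - dotp a a| / `|2 * (dotp b q - dotp a q)|.
have f0 a b : 0 <= f a b by rewrite /f divr_ge0.
exists (\sum_(a <- D) \sum_(b <- D) f a b) => mu.
rewrite gt_max => /andP[Hm mu0] p pD Hn p' p'D.
rewrite leNgt; apply/negP => Hg.
have := Hn p' p'D; rewrite /enorm ler_sqrt ?dotp_ge0 // !dotp_expand => Hle.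
have Hf : f p p' <= \sum_(a <- D) \sum_(b <- D) f a b.
  have h1 : f p p' <= \sum_(b <- D) f p b by apply: le_sum_mem.
  have h2 : \sum_(b <- D) f p b <= \sum_(a <- D) \sum_(b <- D) f a b.
    have := (@le_sum_mem R _ D (fun a => \sum_(b <- D) f a b) p); apply => //.
    by move=> y; rewrite sumr_ge0.
  exact: le_trans h1 h2.
have Hg' : 0 < 2 * (dotp p' q - dotp p q) by rewrite mulr_gt0 // subr_gt0.
have : mu * (2 * (dotp p' q - dotp p q)) <= dotp p' p' - dotp p p by lra.
rewrite -ler_pdivlMr // => H1.
have : f p p' < mu by apply: le_lt_trans Hf Hm.
rewrite /f (gtr0_norm Hg') => H2.
have : (dotp p' p' - dotp p p) / (2 * (dotp p' q - dotp p q)) <=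
   `|dotp p' p' - dotp p p| / (2 * (dotp p' q - dotp p q)).
  by rewrite ler_pM2r ?invr_gt0 // ler_norm.
lra.
Qed.
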